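(* Let $P$ be any poset on $\{1,2,\ldots,n\}$ and $k$ any field. Let $S=k[U_J]_{J\in\mathcal{J}_{\mathrm{conn}}(P)}$ be the polynomial ring with one variable for each nonempty connected order ideal of $P$, and let $\varphi:S\to R_P$ be the $k$-algebra map $U_J\mapsto \mathbf{x}^J:=\prod_{j\in J}x_j$. Then $\varphi$ is surjective, so $0\to I_P\to S\xrightarrow{\varphi} R_P\to 0$ is a presentation of $R_P$ with $I_P=\ker\varphi$, and this presentation is minimal; moreover $I_P$ has a minimal generating set indexed by $\Pi(P)$, consisting of the binomials $$\mathrm{syz}_{J_1,J_2}:=U_{J_1}U_{J_2}-U_{J_1\cup J_2}\cdot U_{J^{(1)}}U_{J^{(2)}}\cdots U_{J^{(t)}},\qquad \{J_1,J_2\}\in\Pi(P),$$ where $J^{(1)},\ldots,J^{(t)}$ are the connected components (i.e. the vertex sets of the connected components of the restricted Hasse diagram) of $J_1\cap J_2$.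
   Context: All posets are finite. A weak $P$-partition of a poset $P$ on $\{1,\ldots,n\}$ is a map $f:\{1,\ldots,n\}\to\mathbb{N}=\{0,1,2,\ldots\}$ with $f(i)\ge f(j)$ whenever $i<_P j$. $R_P$ is the subalgebra of $k[x_1,\ldots,x_n]$ spanned $k$-linearly by the monomials $\mathbf{x}^f=x_1^{f(1)}\cdots x_n^{f(n)}$ for $f$ a weak $P$-partition. An order ideal of $P$ is a subset $I$ with $p\le_P i\in I\Rightarrow p\in I$. A connected order ideal is a nonempty order ideal $J$ whose induced Hasse diagram (the Hasse diagram of $P$ restricted to $J$) is connected; $\mathcal{J}_{\mathrm{conn}}(P)$ is the set of these. Two connected order ideals intersect trivially if they are disjoint or nested (one contains the other), and nontrivially otherwise. $\Pi(P)$ is the set of unordered pairs $\{J_1,J_2\}$ of connected order ideals intersecting nontrivially. *)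

(* Defs.v *)
From HB Require Import structures.
From mathcomp Require Import all_boot all_order all_algebra.
From mathcomp Require Export mpoly.
Set Implicit Arguments. Unset Strict Implicit. Unset Printing Implicit Defensive.
Import GRing.Theory.
Local Open Scope ring_scope.

(* A poset P on {1,...,n} is represented by its order relation [le] on 'I_n
   (the hypotheses that [le] is a partial order are stated in the theorem). *)
Section Poset.
Variables (n : nat) (le : rel 'I_n).

Definition plt (i j : 'I_n) : bool := (i != j) && le i j.

Definition covers (i j : 'I_n) : bool :=
  plt i j && [forall k, ~~ (plt i k && plt k j)].

Definition order_ideal (I : {set 'I_n}) : bool :=
  [forall i, forall p, (le p i && (i \in I)) ==> (p \in I)].

Definition hasse_in (A : {set 'I_n}) : rel 'I_n :=
  fun x y => [&& x \in A, y \in A & covers x y || covers y x].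

Definition components (A : {set 'I_n}) : {set {set 'I_n}} :=
  [set [set y in A | connect (hasse_in A) x y] | x in A].

Definition conn_ideal (J : {set 'I_n}) : bool :=
  [&& order_ideal J, J != set0 &
      [forall x in J, forall y in J, connect (hasse_in J) x y]].

Definition cideal : Type := {J : {set 'I_n} | conn_ideal J}.

Definition nontriv (J1 J2 : {set 'I_n}) : bool :=
  [&& ~~ [disjoint J1 & J2], ~~ (J1 \subset J2) & ~~ (J2 \subset J1)].

Definition weak_Ppart (m : 'X_{1..n}) : bool :=
  [forall i, forall j, plt i j ==> (m j <= m i)%N].

Variable k : fieldType.

(* R_P: the k-span of the monomials x^f, f a weak P-partition, i.e. the
   polynomials all of whose monomials are such x^f *)
Definition in_RP (q : {mpoly k[n]}) : Prop :=
  forall m, m \in msupp q -> weak_Ppart m.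

Definition xJ (J : {set 'I_n}) : {mpoly k[n]} := \prod_(j in J) 'X_j.

End Poset.

Definition cideal_fin n (le : rel 'I_n) : finType := cideal le.

(* S = k[U_J]_{J in J_conn(P)}: variables indexed by 'I_#|J_conn(P)| via
   the enumeration of the finite type J_conn(P). *)
Definition nvars n (le : rel 'I_n) : nat := #|cideal_fin le|.

Definition Sring (k : fieldType) n (le : rel 'I_n) := {mpoly k[nvars le]}.

Definition UJ (k : fieldType) n (le : rel 'I_n) (J : cideal_fin le)
  : {mpoly k[nvars le]} := 'X_(enum_rank J).

(* U_A for a set A; A is always a connected order ideal where this is used
   (union of two nontrivially-intersecting connected ideals, connected
   components of their intersection); the default value 0 is never hit. *)
Definition Uset (k : fieldType) n (le : rel 'I_n) (A : {set 'I_n})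
  : {mpoly k[nvars le]} :=
  match @insub _ (conn_ideal le) (cideal le) A with
  | Some J => UJ k J
  | None => 0
  end.

Definition phi (k : fieldType) n (le : rel 'I_n) (p : {mpoly k[nvars le]})
  : {mpoly k[n]} :=
  mmap (@mpolyC n k) (fun i => xJ k (val (enum_val i : cideal_fin le))) p.

Definition syz (k : fieldType) n (le : rel 'I_n) (J1 J2 : cideal_fin le)
  : {mpoly k[nvars le]} :=
  UJ k J1 * UJ k J2
  - Uset k le (val J1 :|: val J2)
    * \prod_(K in components le (val J1 :&: val J2)) Uset k le K.

Definition in_ideal (k : fieldType) (m : nat) (I : finType)
  (g : I -> {mpoly k[m]}) (Q : pred I) (p : {mpoly k[m]}) : Prop :=
  exists c : I -> {mpoly k[m]}, p = \sum_(i | Q i) c i * g i.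

Arguments in_RP {n} le {k} q.
Arguments phi k {n le} p.
Arguments syz k {n le} J1 J2.
Arguments UJ k {n le} J.
Arguments Uset k {n} le A.
Arguments in_ideal {k m I} g Q p.

(* Main.v *)
Require Import Defs.
From HB Require Import structures.
From mathcomp Require Import all_boot all_order all_algebra.
From mathcomp Require Import mpoly.
Set Implicit Arguments. Unset Strict Implicit. Unset Printing Implicit Defensive.
Import GRing.Theory.

Section Comb.
Variables (n : nat) (le : rel 'I_n).
Hypotheses (le_refl : reflexive le) (le_anti : antisymmetric le)
  (le_trans : transitive le).

Implicit Types (A B K J : {set 'I_n}).
Local Notation plt := (plt le).
Local Notation hasse_in := (hasse_in le).

Lemma plt_le x y : plt x y -> le x y.
Proof. by case/andP. Qed.

Lemma plt_trans x y z : plt x y -> plt y z -> plt x z.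
Proof.
move=> /andP[nxy lxy] /andP[nyz lyz]; rewrite /Defs.plt (le_trans lxy lyz) andbT.
apply/eqP=> exz; subst z; move/negP: nxy; apply; apply/eqP/le_anti.
by rewrite lxy lyz.
Qed.

Lemma hasse_sym A : ssrbool.symmetric (hasse_in A).
Proof. by move=> x y; rewrite /Defs.hasse_in andbCA orbC. Qed.

Lemma hasse_csym A : connect_sym (hasse_in A).
Proof. exact/sym_connect_sym/hasse_sym. Qed.

Lemma hasse_mono (A B : {set 'I_n}) x y : A \subset B -> connect (hasse_in A) x y ->
  connect (hasse_in B) x y.
Proof.
move=> sAB; apply: connect_sub => u v /and3P[uA vA c]; apply: connect1.
by rewrite /Defs.hasse_in (subsetP sAB _ uA) (subsetP sAB _ vA).
Qed.

Lemma idealP A : reflect (forall i p, le p i -> i \in A -> p \in A)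
  (order_ideal le A).
Proof.
apply: (iffP forallP) => [H i p lpi iA|H i].
  by move: (H i) => /forallP /(_ p); rewrite lpi iA.
by apply/forallP=> p; apply/implyP=> /andP[lpi iA]; apply: H lpi iA.
Qed.

Lemma comp_equiv A : {in A & &, equivalence_rel (connect (hasse_in A))}.
Proof.
move=> x y z _ _ _; split; first exact: connect0.
move=> cxy; apply/idP/idP => [cxz|cyz]; last exact: connect_trans cxy cyz.
by apply: connect_trans cxz; rewrite hasse_csym.
Qed.

Lemma comp_partition A : partition (components le A) A.
Proof. exact: equivalence_partitionP (comp_equiv (A:=A)). Qed.

Lemma comp_sub A K : K \in components le A -> K \subset A.
Proof. exact: partitionS (comp_partition A). Qed.

Lemma comp_neq0 A K : K \in components le A -> K != set0.
Proof. exact: partition_neq0 (comp_partition A). Qed.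

Lemma comp_of A x : x \in A -> [set y in A | connect (hasse_in A) x y] \in components le A.
Proof. by move=> xA; apply: imset_f. Qed.

Lemma comp_mem A x : x \in A -> x \in [set y in A | connect (hasse_in A) x y].
Proof. by move=> xA; rewrite inE xA connect0. Qed.

Lemma cover_path A : order_ideal le A -> forall p y, y \in A -> plt p y ->
  connect (hasse_in A) p y.
Proof.
move=> /idealP idA.
suff H c : forall p y, #|[set z | plt p z && plt z y]| <= c -> y \in A -> plt p y ->
  connect (hasse_in A) p y by move=> p y; apply: H (leqnn _).
elim: c => [|c IH] p y.
  rewrite leqn0 cards_eq0 => /eqP e0 yA lpy; apply: connect1.
  rewrite /Defs.hasse_in yA (idA _ _ (plt_le lpy) yA) /= /covers lpy /=.
  apply/orP; left; apply/forallP=> z; apply/negP=> hz.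
  have: z \in [set z | plt p z && plt z y] by rewrite inE.
  by rewrite e0 inE.
move=> hc yA lpy.
case: (set_0Vmem [set z | plt p z && plt z y]) => [e0|[z]].
  apply: connect1.
  rewrite /Defs.hasse_in yA (idA _ _ (plt_le lpy) yA) /= /covers lpy /=.
  apply/orP; left; apply/forallP=> w; apply/negP=> hz.
  have: w \in [set z | plt p z && plt z y] by rewrite inE.
  by rewrite e0 inE.
rewrite inE => /andP[pz zy].
have zA : z \in A by apply: idA (plt_le zy) yA.
apply: (@connect_trans _ _ z).
  apply: (IH) => //; rewrite -ltnS; apply: leq_trans hc; apply: proper_card.
  apply/properP; split.
    by apply/subsetP=> w; rewrite !inE => /andP[-> wz]; rewrite (plt_trans wz zy).
  exists z; rewrite !inE; first by apply/andP.
  by rewrite /Defs.plt eqxx andbF.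
apply: (IH) => //; rewrite -ltnS; apply: leq_trans hc; apply: proper_card.
apply/properP; split.
  by apply/subsetP=> w; rewrite !inE => /andP[zw ->]; rewrite (plt_trans pz zw).
exists z; rewrite !inE; first by apply/andP.
by rewrite /Defs.plt eqxx.
Qed.

Lemma comp_ideal A K : order_ideal le A -> K \in components le A -> order_ideal le K.
Proof.
move=> idA /imsetP[x xA ->]; apply/idealP => i p lpi; rewrite !inE => /andP[iA cxi].
have pA : p \in A by move/idealP: idA => /(_ i p lpi iA).
rewrite pA /=; case: (eqVneq p i) => [-> //|npi].
apply: connect_trans cxi _; rewrite hasse_csym; apply: cover_path => //.
by rewrite /Defs.plt npi lpi.
Qed.

Lemma comp_conn_path A x y z : x \in A -> connect (hasse_in A) x y ->
  connect (hasse_in A) y z ->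
  connect (hasse_in [set w in A | connect (hasse_in A) x w]) y z.
Proof.
move=> xA cxy /connectP[p pth ->]; elim: p y cxy pth => [|w p IH] y cxy /=.
  by move=> _; apply: connect0.
case/andP=> /and3P[yA wA c] pth.
have cxw : connect (hasse_in A) x w by apply: connect_trans cxy (connect1 _); rewrite /Defs.hasse_in yA wA.
apply: connect_trans (IH _ cxw pth); apply: connect1.
by rewrite /Defs.hasse_in !inE yA wA cxy cxw.
Qed.

Lemma comp_connected A K : K \in components le A ->
  forall y z, y \in K -> z \in K -> connect (hasse_in K) y z.
Proof.
move=> /imsetP[x xA ->] y z; rewrite !inE => /andP[yA cxy] /andP[zA cxz].
apply: comp_conn_path => //; apply: connect_trans cxz.
by rewrite hasse_csym.
Qed.

Lemma conn_idealP J : reflect [/\ order_ideal le J, J != set0 &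
  forall x y, x \in J -> y \in J -> connect (hasse_in J) x y] (conn_ideal le J).
Proof.
apply: (iffP and3P) => [[i n0 /forallP H]|[i n0 H]]; split=> //.
  move=> x y xJ yJ; move: (H x); rewrite xJ /= => /forallP /(_ y).
  by rewrite yJ.
by apply/forallP => x; apply/implyP=> xJ; apply/forallP=> y; apply/implyP=> yJ; apply: H.
Qed.

Lemma comp_conn A K : order_ideal le A -> K \in components le A -> conn_ideal le K.
Proof.
move=> idA KA; apply/conn_idealP; split.
- exact: comp_ideal KA.
- exact: comp_neq0 KA.
- exact: comp_connected KA.
Qed.

Lemma union_conn J1 J2 : conn_ideal le J1 -> conn_ideal le J2 ->
  ~~ [disjoint J1 & J2] -> conn_ideal le (J1 :|: J2).
Proof.
move=> /conn_idealP[i1 n1 c1] /conn_idealP[i2 n2 c2] /pred0Pn[z /andP[z1 z2]].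
apply/conn_idealP; split.
- apply/idealP=> i p lpi; rewrite !inE => /orP[h|h].
    by move/idealP: i1 => /(_ i p lpi h) ->.
  by move/idealP: i2 => /(_ i p lpi h) ->; rewrite orbT.
- by apply/set0Pn; exists z; apply/setUP; left.
have H x : x \in J1 :|: J2 -> connect (hasse_in (J1 :|: J2)) x z.
  rewrite inE => /orP[h|h].
    by apply: (hasse_mono (subsetUl J1 J2)); apply: c1.
  by apply: (hasse_mono (subsetUr J1 J2)); apply: c2.
move=> x y hx hy; apply: connect_trans (H x hx) _; rewrite hasse_csym; exact: H.
Qed.

Lemma inter_ideal J1 J2 : order_ideal le J1 -> order_ideal le J2 ->
  order_ideal le (J1 :&: J2).
Proof.
move=> /idealP i1 /idealP i2; apply/idealP=> i p lpi; rewrite !inE => /andP[h1 h2].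
by rewrite (i1 _ _ lpi h1) (i2 _ _ lpi h2).
Qed.

Lemma conn_neq0 J : conn_ideal le J -> J != set0.
Proof. by case/and3P. Qed.

Lemma conn_ideal_ideal J : conn_ideal le J -> order_ideal le J.
Proof. by case/and3P. Qed.

End Comb.

Section Mono.
Variables (n : nat) (le : rel 'I_n).
Hypotheses (le_refl : reflexive le) (le_anti : antisymmetric le)
  (le_trans : transitive le).
Implicit Types (A B K J : {set 'I_n}).
Local Notation N := (nvars le).
Implicit Types (m : 'X_{1..N}).

Definition ev (i : 'I_N) : {set 'I_n} := val (enum_val i : cideal_fin le).
Definition phim m : 'X_{1..n} :=
  [multinom (\sum_(i < N) m i * (x \in ev i))%N | x < n].
Definition mu m := (\sum_(i < N) m i * 3 ^ #|ev i|)%N.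
Definition lam m : bool := [forall i, forall j,
  (0 < m i) ==> (0 < m j) ==> ~~ nontriv (ev i) (ev j)].
Definition maxs m := [set i | (0 < m i) &&
  [forall j, (0 < m j) ==> ~~ (ev i \proper ev j)]].
Definition ri (d : cideal_fin le) A : 'I_N := enum_rank (insubd d A).

Lemma ev_conn i : conn_ideal le (ev i).
Proof. exact: valP. Qed.

Lemma ev_inj : injective ev.
Proof. by move=> i j /val_inj /enum_val_inj. Qed.

Lemma ev_rank (J : cideal_fin le) : ev (enum_rank J) = val J.
Proof. by rewrite /ev enum_rankK. Qed.

Lemma ev_ri d A : conn_ideal le A -> ev (ri d A) = A.
Proof. by move=> cA; rewrite /ri ev_rank val_insubd cA. Qed.

Lemma ev_neq0 i : ev i != set0.
Proof. exact: conn_neq0 (ev_conn i). Qed.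

Lemma phimE m x : phim m x = (\sum_(i < N) m i * (x \in ev i))%N.
Proof. exact: mnmE. Qed.

Lemma phimD m1 m2 : phim (m1 + m2)%MM = (phim m1 + phim m2)%MM.
Proof.
apply/mnmP=> x; rewrite mnmDE !phimE -big_split /=; apply: eq_bigr=> i _.
by rewrite mnmDE mulnDl.
Qed.

Lemma phim0 : phim 0%MM = 0%MM.
Proof. by apply/mnmP=> x; rewrite mnm0E phimE big1 // => i _; rewrite mnm0E. Qed.

Lemma phimU i x : phim U_(i)%MM x = (x \in ev i).
Proof.
rewrite phimE (bigD1 i) //= mnm1E eqxx mul1n big1 ?addn0 // => j nji.
by rewrite mnm1E eq_sym (negbTE nji).
Qed.

Lemma phim_sum (I : finType) (P : pred I) (F : I -> 'X_{1..N}) x :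
  phim (\sum_(t | P t) F t)%MM x = (\sum_(t | P t) phim (F t) x)%N.
Proof. by rewrite (big_morph phim phimD phim0) mnm_sumE. Qed.

Lemma sum_in K x : (\sum_(y in K) (y == x))%N = (x \in K).
Proof.
case: (boolP (x \in K)) => xK.
  rewrite (bigD1 x) //= eqxx big1 // => y /andP[_ /negbTE] ->; done.
by rewrite big1 // => y yK; apply/eqP; rewrite eqb0; apply: contraNneq xK => <-.
Qed.

Lemma part_sum (P : {set {set 'I_n}}) D x : partition P D ->
  (\sum_(K in P) (x \in K))%N = (x \in D).
Proof.
move=> pP; rewrite -sum_in (set_partition_big _ pP) /=.
by apply: eq_bigr => K _; rewrite sum_in.
Qed.

Lemma phim_comp d (C : {set {set 'I_n}}) x : {in C, forall K, conn_ideal le K} ->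
  phim (\sum_(K in C) U_(ri d K))%MM x = (\sum_(K in C) (x \in K))%N.
Proof.
move=> cC; rewrite phim_sum; apply: eq_bigr => K KC.
by rewrite phimU ev_ri // cC.
Qed.

Lemma phim_ge m i x : x \in ev i -> (m i <= phim m x)%N.
Proof.
by move=> xi; rewrite phimE (bigD1 i) //= xi muln1 leq_addr.
Qed.

Lemma phim_ge2 m i j x : i != j -> x \in ev i -> x \in ev j ->
  (m i + m j <= phim m x)%N.
Proof.
move=> nij xi xj; rewrite phimE (bigD1 i) //= (bigD1 j) 1?eq_sym //= xi xj !muln1.
by rewrite addnA leq_addr.
Qed.

Lemma phim_pos m x : (0 < phim m x)%N -> exists2 i, (0 < m i)%N & x \in ev i.
Proof.
rewrite phimE => h; apply/exists_inP; apply: contraLR h; rewrite negb_exists_in.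
move=> /forall_inP H; rewrite -leqNgt leqn0; apply/eqP/big1 => i _.
case: (boolP (x \in ev i)) => xi; last by rewrite muln0.
case: (posnP (m i)) => [->|mpos]; first by rewrite mul0n.
by move: (H i mpos); rewrite xi.
Qed.

Lemma phim_le_deg m x : (phim m x <= mdeg m)%N.
Proof.
rewrite phimE mdegE; apply: leq_sum => i _.
by case: (x \in ev i); rewrite ?muln1 ?muln0.
Qed.

Lemma phim_weak m : weak_Ppart le (phim m).
Proof.
apply/forallP=> x; apply/forallP=> y; apply/implyP=> pxy.
rewrite !phimE; apply: leq_sum => i _.
case: (boolP (y \in ev i)) => yi; last by rewrite muln0.
have /idealP H := conn_ideal_ideal (ev_conn i).
by rewrite (H y x) //; case/andP: pxy.
Qed.

Lemma phim_eq0 m : phim m = 0%MM -> m = 0%MM.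
Proof.
move=> h; apply/mnmP=> i; rewrite mnm0E; apply/eqP; rewrite -leqn0.
have /set0Pn[x xi] := ev_neq0 i.
by have := phim_ge m xi; rewrite h mnm0E.
Qed.

End Mono.

Section Lam.
Variables (n : nat) (le : rel 'I_n).
Hypotheses (le_refl : reflexive le) (le_anti : antisymmetric le)
  (le_trans : transitive le).
Implicit Types (A B K J : {set 'I_n}).
Local Notation N := (nvars le).
Implicit Types (m : 'X_{1..N}).
Local Notation ev := (@ev n le).
Local Notation phim := (@phim n le).
Local Notation lam := (@lam n le).
Local Notation maxs := (@maxs n le).

Lemma lamP m : reflect (forall i j, (0 < m i)%N -> (0 < m j)%N -> ~~ nontriv (ev i) (ev j))
  (lam m).
Proof.
apply: (iffP forallP) => [H i j mi mj|H i].
  by move: (H i) => /forallP /(_ j); rewrite mi mj.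
by apply/forallP=> j; apply/implyP=> mi; apply/implyP=> mj; apply: H.
Qed.

Lemma maxsP m i : reflect ((0 < m i)%N /\ forall j, (0 < m j)%N -> ~~ (ev i \proper ev j))
  (i \in maxs m).
Proof.
rewrite inE; apply: (iffP andP) => [[mi /forallP H]|[mi H]]; split=> //.
  by move=> j mj; move: (H j); rewrite mj.
by apply/forallP=> j; apply/implyP; apply: H.
Qed.

Lemma maxs_ex m i : (0 < m i)%N -> exists2 j, j \in maxs m & ev i \subset ev j.
Proof.
move=> mi.
have Pi : (0 < m i)%N && (ev i \subset ev i) by rewrite mi subxx.
case: (@arg_maxnP _ i (fun j => (0 < m j)%N && (ev i \subset ev j)) (fun j => #|ev j|) Pi) => j /andP[mj sij] Hmax.
exists j => //; apply/maxsP; split=> // j' mj'; apply/negP=> prj.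
have := Hmax j'; rewrite mj' (subset_trans sij (proper_sub prj)) => /(_ isT) /=.
by rewrite leqNgt (proper_card prj).
Qed.

Lemma maxs_disj m i j : lam m -> i \in maxs m -> j \in maxs m -> i != j ->
  [disjoint ev i & ev j].
Proof.
move=> /lamP L /maxsP[mi Hi] /maxsP[mj Hj] nij.
move: (L i j mi mj); rewrite /nontriv !negb_and !negbK => /or3P[//|sij|sji].
  case: (eqVneq (ev i) (ev j)) => [/ev_inj eij|neij]; first by rewrite eij eqxx in nij.
  by move: (Hi j mj); rewrite properEneq neij sij.
case: (eqVneq (ev j) (ev i)) => [/ev_inj eij|neij]; first by rewrite eij eqxx in nij.
by move: (Hj i mi); rewrite properEneq neij sji.
Qed.

Lemma supp_maxs m y : (0 < phim m y)%N -> exists2 j, j \in maxs m & y \in ev j.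
Proof.
case/phim_pos => j mj yj; case: (maxs_ex mj) => j' j'm sjj'.
by exists j' => //; apply: (subsetP sjj').
Qed.

Lemma maxs_cover m J x i' : lam m -> conn_ideal le J ->
  (forall y, y \in J -> (0 < phim m y)%N) -> x \in J -> i' \in maxs m ->
  x \in ev i' -> J \subset ev i'.
Proof.
move=> L /conn_idealP[_ _ cJ] supp xJ mi' xi'; apply/subsetP => y yJ.
have cl : closed (hasse_in le J) (ev i').
  apply: intro_closed; first exact: hasse_csym.
  move=> u v /and3P[uJ vJ cov] ui.
  case: (supp_maxs (supp v vJ)) => j jm vj.
  case: (eqVneq j i') => [<- //|nji].
  have dj := maxs_disj L jm mi' nji.
  have /idealP idj := conn_ideal_ideal (ev_conn j).
  have /idealP idi := conn_ideal_ideal (ev_conn i').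
  case/orP: cov => /andP[/andP[_ luv] _].
    by have := idj v u luv vj; rewrite (disjointFl dj).
  exact: idi luv ui.
by rewrite -(closed_connect cl (cJ x y xJ yJ)).
Qed.

Lemma maxs_sub m m' : lam m -> lam m' -> phim m = phim m' -> maxs m \subset maxs m'.
Proof.
move=> L L' e; apply/subsetP => i im; have /maxsP[mi _] := im.
have /set0Pn[x xi] := ev_neq0 i.
have s1 y : y \in ev i -> (0 < phim m' y)%N.
  by move=> yi; rewrite -e; apply: leq_trans mi (phim_ge _ yi).
case: (supp_maxs (s1 x xi)) => i' i'm xi'.
have H1 := maxs_cover L' (ev_conn i) s1 xi i'm xi'.
have /maxsP[mi' _] := i'm.
have s2 y : y \in ev i' -> (0 < phim m y)%N.
  by move=> yi; rewrite e; apply: leq_trans mi' (phim_ge _ yi).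
have H2 := maxs_cover L (ev_conn i') s2 xi' im xi.
have -> : i = i' by apply: ev_inj; apply/eqP; rewrite eqEsubset H1 H2.
done.
Qed.

Definition rest m : 'X_{1..N} := [multinom (m i - (i \in maxs m))%N | i < N].
Definition Em m : 'X_{1..N} := [multinom ((i \in maxs m) : nat) | i < N].

Lemma rest_add m : m = (rest m + Em m)%MM.
Proof.
apply/mnmP => i; rewrite mnmDE !mnmE subnK //.
by case: (boolP (i \in maxs m)) => // /maxsP[].
Qed.

Lemma lam_rest m : lam m -> lam (rest m).
Proof.
move/lamP => L; apply/lamP => i j; rewrite !mnmE => hi hj.
apply: L; [apply: leq_trans hi _| apply: leq_trans hj _]; exact: leq_subr.
Qed.

Lemma mdeg_rest m : m != 0%MM -> (mdeg (rest m) < mdeg m)%N.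
Proof.
move=> nm; rewrite {2}(rest_add m) mdegD -{1}[mdeg (rest m)]addn0 ltn_add2l.
have [i mi] : exists i, (0 < m i)%N.
  apply/existsP; apply: contraR nm; rewrite negb_exists => /forallP H.
  by apply/eqP/mnmP=> i; rewrite mnm0E; move: (H i); rewrite lt0n negbK => /eqP.
case: (maxs_ex mi) => j jm _.
by rewrite mdegE (bigD1 j) //= mnmE jm.
Qed.

Lemma lam_inj m m' : lam m -> lam m' -> phim m = phim m' -> m = m'.
Proof.
move: {2}(mdeg m) (leqnn (mdeg m)) => d; elim: d m m' => [|d IH] m m'.
  rewrite leqn0 mdeg_eq0 => /eqP -> _ _ e.
  by apply/esym/phim_eq0; rewrite -e phim0.
move=> hd L L' e.
case: (eqVneq m 0%MM) => [e0 | nm].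
  by rewrite e0; apply/esym/phim_eq0; rewrite -e e0 phim0.
have em : maxs m = maxs m' by apply/eqP; rewrite eqEsubset !maxs_sub.
have eE : Em m = Em m' by apply/mnmP=> i; rewrite !mnmE em.
have er : phim (rest m) = phim (rest m').
  apply: (@addIm _ (phim (Em m))).
  by rewrite -phimD -rest_add eE -phimD -rest_add.
rewrite (rest_add m) (rest_add m') eE; congr (_ + _)%MM.
apply: IH => //; last exact: lam_rest.
  by rewrite -ltnS; apply: leq_trans hd; apply: mdeg_rest.
exact: lam_rest.
Qed.

End Lam.

From mathcomp Require Import zify.

Section Poly.
Variables (k : fieldType) (n : nat) (le : rel 'I_n).
Hypotheses (le_refl : reflexive le) (le_anti : antisymmetric le)
  (le_trans : transitive le).
Implicit Types (A B K J : {set 'I_n}).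
Local Notation N := (nvars le).
Implicit Types (m : 'X_{1..N}).
Local Notation ev := (@ev n le).
Local Notation phim := (@phim n le).
Local Notation lam := (@lam n le).
Local Notation mu := (@mu n le).
Local Notation ri := (@ri n le).
Local Notation phi := (@phi k n le).
Local Open Scope ring_scope.

Lemma xJ_X J : xJ k J = 'X_[\sum_(j in J) U_(j)].
Proof. by rewrite /xJ mprodXE. Qed.

Lemma phiX m : phi 'X_[m] = 'X_[phim m].
Proof.
rewrite /Defs.phi mmapX /mmap1.
rewrite (eq_bigr (fun i => 'X_[\sum_(j in ev i) U_(j)] ^+ m i)); last first.
  by move=> i _; rewrite xJ_X.
rewrite mprodXnE; congr 'X_[_]; apply/mnmP=> x.
rewrite mnm_sumE phimE; apply: eq_bigr => i _.
rewrite mulmnE mnm_sumE mulnC; congr (_ * _)%N.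
rewrite -sum_in; apply: eq_bigr => j _; by rewrite mnm1E.
Qed.

Lemma phiD p q : phi (p + q) = phi p + phi q.
Proof. by rewrite /Defs.phi raddfD. Qed.
Lemma phiB p q : phi (p - q) = phi p - phi q.
Proof. by rewrite /Defs.phi raddfB. Qed.
Lemma phiM p q : phi (p * q) = phi p * phi q.
Proof. by rewrite /Defs.phi rmorphM. Qed.
Lemma phiZ c p : phi (c *: p) = c *: phi p.
Proof. by rewrite /Defs.phi mmapZ mul_mpolyC. Qed.
Lemma phi0 : phi 0 = 0.
Proof. by rewrite /Defs.phi raddf0. Qed.
Lemma phi_sum (I : Type) (r : seq I) (P : pred I) (F : I -> {mpoly k[N]}) :
  phi (\sum_(t <- r | P t) F t) = \sum_(t <- r | P t) phi (F t).
Proof. by rewrite /Defs.phi raddf_sum. Qed.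

Lemma coef_phi p f : (phi p)@_f = \sum_(m <- msupp p) p@_m * (phim m == f)%:R.
Proof.
rewrite {1}(mpolyE p) phi_sum raddf_sum; apply: eq_bigr => m _ /=.
by rewrite phiZ phiX mcoeffZ mcoeffX.
Qed.

Lemma coef_phi_uniq p m : m \in msupp p ->
  (forall m', m' \in msupp p -> phim m' = phim m -> m' = m) ->
  (phi p)@_(phim m) = p@_m.
Proof.
move=> mp H; rewrite coef_phi (bigD1_seq m) ?msupp_uniq //= eqxx mulr1.
rewrite big_seq_cond big1 ?addr0 // => m' /andP[m'p nm'].
case: eqP => [/(H _ m'p) e|]; last by rewrite mulr0.
by rewrite e eqxx in nm'.
Qed.

Lemma claim1 p : in_RP le (phi p).
Proof.
move=> f; rewrite mcoeff_msupp coef_phi => nz.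
case: (boolP (has (fun m => phim m == f) (msupp p))) => [/hasP[m _ /eqP <-]|/hasPn H].
  exact: phim_weak.
by move: nz; rewrite big_seq big1 ?eqxx // => m /H /negbTE ->; rewrite mulr0.
Qed.

Definition indf (f : 'X_{1..n}) : 'X_{1..n} := [multinom ((0 < f x)%N : nat) | x < n].
Definition predf (f : 'X_{1..n}) : 'X_{1..n} := [multinom (f x).-1 | x < n].

Lemma surj_mono f : weak_Ppart le f -> exists m, phim m = f.
Proof.
move: {2}(mdeg f) (leqnn (mdeg f)) => d; elim: d f => [|d IH] f.
  rewrite leqn0 mdeg_eq0 => /eqP -> _; exists 0%MM; exact: phim0.
move=> hd wf.
case: (eqVneq f 0%MM) => [-> | nf]; first by exists 0%MM; exact: phim0.
have ef : f = (predf f + indf f)%MM.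
  by apply/mnmP=> x; rewrite mnmDE /predf /indf !mnmE; case: (f x) => [|t] /=; rewrite ?addn0 ?addn1.
have wf' : weak_Ppart le (predf f).
  apply/forallP=> x; apply/forallP=> y; apply/implyP=> pxy.
  move/forallP: wf => /(_ x) /forallP /(_ y); rewrite pxy /= /predf !mnmE => h.
  by rewrite -!subn1 leq_sub2r.
have [x fx] : exists x, (0 < f x)%N.
  apply/existsP; apply: contraR nf; rewrite negb_exists => /forallP H.
  by apply/eqP/mnmP=> i; rewrite mnm0E; move: (H i); rewrite lt0n negbK => /eqP.
have hd' : (mdeg (predf f) <= d)%N.
  rewrite -ltnS; apply: leq_trans hd; rewrite {2}ef mdegD -{1}[mdeg (predf f)]addn0.
  by rewrite ltn_add2l mdegE (bigD1 x) //= /indf mnmE fx.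
case: (IH _ hd' wf') => m0 em0.
set A := [set x | (0 < f x)%N].
have idA : order_ideal le A.
  apply/idealP => i p lpi; rewrite !inE => fi.
  case: (eqVneq p i) => [-> //|npi].
  move/forallP: wf => /(_ p) /forallP /(_ i); rewrite /Defs.plt npi lpi /= => h.
  exact: leq_trans fi h.
have xA : x \in A by rewrite inE.
have cK0 := comp_conn le_anti le_trans idA (comp_of le xA).
pose d0 : cideal_fin le := Sub _ cK0.
exists (m0 + \sum_(K in components le A) U_(ri d0 K))%MM.
apply/mnmP=> y; rewrite phimD mnmDE em0 phim_comp; last first.
  by move=> K KA; exact: (comp_conn le_anti le_trans idA KA).
rewrite (part_sum _ (comp_partition le A)) {2}ef mnmDE /indf mnmE inE.
done.
Qed.

Lemma claim2 q : in_RP le q -> exists p, phi p = q.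
Proof.
move=> Hq.
suff H s : {subset s <= msupp q} ->
  exists p, phi p = \sum_(f <- s) q@_f *: 'X_[f].
  by case: (H (msupp q) (fun x h => h)) => p e; exists p; rewrite e -mpolyE.
elim: s => [|f s IH] sub; first by exists 0; rewrite phi0 big_nil.
case: IH => [g gs|p e]; first by apply: sub; rewrite inE gs orbT.
have [m em] := surj_mono (Hq f (sub f (mem_head _ _))).
exists (q@_f *: 'X_[m] + p).
by rewrite phiD phiZ phiX em e big_cons.
Qed.


Definition Ideal (p : {mpoly k[N]}) : Prop :=
  in_ideal (fun JJ : cideal_fin le * cideal_fin le => syz k JJ.1 JJ.2)
           (fun JJ => nontriv (val JJ.1) (val JJ.2)) p.

Lemma id0 : Ideal 0.
Proof. by exists (fun _ => 0); rewrite big1 // => JJ _; rewrite mul0r. Qed.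

Lemma idD p q : Ideal p -> Ideal q -> Ideal (p + q).
Proof.
case=> c1 -> [c2 ->]; exists (fun JJ => c1 JJ + c2 JJ).
by rewrite -big_split; apply: eq_bigr => JJ _; rewrite mulrDl.
Qed.

Lemma idM r p : Ideal p -> Ideal (r * p).
Proof.
case=> c ->; exists (fun JJ => r * c JJ).
by rewrite mulr_sumr; apply: eq_bigr => JJ _; rewrite mulrA.
Qed.

Lemma idZ c p : Ideal p -> Ideal (c *: p).
Proof. by rewrite -mul_mpolyC; apply: idM. Qed.

Lemma idgen (JJ : cideal_fin le * cideal_fin le) :
  nontriv (val JJ.1) (val JJ.2) -> Ideal (syz k JJ.1 JJ.2).
Proof.
move=> q; exists (fun JJ' => (JJ' == JJ)%:R).
rewrite (bigD1 JJ) //= eqxx mul1r big1 ?addr0 // => JJ' /andP[_ /negbTE ->].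
by rewrite mul0r.
Qed.

Lemma Uset_ri d A : conn_ideal le A -> Uset k le A = 'X_(ri d A).
Proof.
move=> cA; rewrite /Uset /ri /insubd.
by case: insubP => [J _ _|]; [done | rewrite cA].
Qed.

Lemma UJ_X i : UJ k (enum_val i : cideal_fin le) = 'X_i.
Proof. by rewrite /UJ enum_valK. Qed.

Lemma muD m1 m2 : mu (m1 + m2)%MM = (mu m1 + mu m2)%N.
Proof. by rewrite /mu -big_split; apply: eq_bigr => i _; rewrite mnmDE mulnDl. Qed.

Lemma mu0 : mu 0%MM = 0%N.
Proof. by rewrite /mu big1 // => i _; rewrite mnm0E. Qed.

Lemma muU i : mu U_(i)%MM = (3 ^ #|ev i|)%N.
Proof.
rewrite /mu (bigD1 i) //= mnm1E eqxx mul1n big1 ?addn0 // => j nji.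
by rewrite mnm1E eq_sym (negbTE nji).
Qed.

Definition Rm (i j : 'I_N) : 'X_{1..N} :=
  (U_(ri (enum_val i) (ev i :|: ev j)) +
   \sum_(K in components le (ev i :&: ev j)) U_(ri (enum_val i) K))%MM.

Lemma syz_decomp i j : nontriv (ev i) (ev j) ->
  [/\ syz k (enum_val i) (enum_val j) = 'X_[U_(i) + U_(j)] - 'X_[Rm i j],
      phim (U_(i) + U_(j))%MM = phim (Rm i j) &
      (mu (U_(i) + U_(j))%MM < mu (Rm i j))%N].
Proof.
move=> nt; have /and3P[nd nsij nsji] := nt.
set d := enum_val i.
have cu : conn_ideal le (ev i :|: ev j) := union_conn (ev_conn i) (ev_conn j) nd.
have idI : order_ideal le (ev i :&: ev j).
  exact: inter_ideal (conn_ideal_ideal (ev_conn i)) (conn_ideal_ideal (ev_conn j)).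
have cK : {in components le (ev i :&: ev j), forall K, conn_ideal le K}.
  by move=> K KC; exact: (comp_conn le_anti le_trans idI KC).
split.
- rewrite /syz !UJ_X -/(ev i) -/(ev j) (Uset_ri d cu).
  rewrite (eq_bigr (fun K => 'X_(ri d K))); last first.
    by move=> K KC; rewrite (Uset_ri d (cK K KC)).
  by rewrite mprodXE !mpolyXD.
- apply/mnmP=> x; rewrite /Rm !phimD !mnmDE !phimU phim_comp // ev_ri //.
  rewrite (part_sum _ (comp_partition le _)) !inE.
  by case: (x \in ev i); case: (x \in ev j).
- rewrite /Rm !muD !muU ev_ri //.
  have h1 := proper_card (properUl nsji).
  have h2 := proper_card (properUr nsij).
  set u := #|ev i :|: ev j| in h1 h2 *.
  case: u h1 h2 => [//|u]; rewrite !ltnS => h1 h2.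
  have e1 := leq_pexp2l (isT : (0 < 3)%N) h1.
  have e2 := leq_pexp2l (isT : (0 < 3)%N) h2.
  rewrite expnS; have : (0 < 3 ^ u)%N by rewrite expn_gt0.
  lia.
Qed.

Lemma step m : ~~ lam m -> exists m',
  [/\ phim m' = phim m, (mu m < mu m')%N & Ideal ('X_[m] - 'X_[m'])].
Proof.
rewrite /lam negb_forall => /existsP[i]; rewrite negb_forall => /existsP[j].
rewrite negb_imply => /andP[mi]; rewrite negb_imply negbK => /andP[mj nt].
have nij : i != j.
  by apply/eqP=> e; move: nt; rewrite e /nontriv subxx andbF.
have hle : (U_(i) + U_(j) <= m)%MM.
  apply/mnm_lepP => t; rewrite mnmDE !mnm1E.
  case: (eqVneq i t) => [eit|nit]; case: (eqVneq j t) => [ejt|njt].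
  - by move: nij; rewrite eit ejt eqxx.
  - by rewrite -eit.
  - by rewrite -ejt.
  - done.
set rst := (m - (U_(i) + U_(j)))%MM.
have em : m = (rst + (U_(i) + U_(j)))%MM by rewrite submK.
have [es ep emu] := syz_decomp nt.
exists (rst + Rm i j)%MM; split.
- by rewrite [in RHS]em [in RHS]phimD ep -phimD.
- by rewrite {1}em muD [mu (rst + _)]muD ltn_add2l.
- rewrite {1}em mpolyXD [X in _ - X]mpolyXD -mulrBr -es.
  apply: idM; exact: (@idgen (enum_val i, enum_val j) nt).
Qed.

Lemma card_sum J : (\sum_(x < n) (x \in J))%N = #|J|.
Proof.
rewrite -sum1_card [RHS]big_mkcond /=; apply: eq_bigr => x _; by case: (x \in J).
Qed.

Lemma mu_bound m : (mu m <= 3 ^ n * mdeg (phim m))%N.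
Proof.
have -> : mdeg (phim m) = (\sum_(i < N) m i * #|ev i|)%N.
  rewrite mdegE (eq_bigr (fun x => \sum_(i < N) m i * (x \in ev i))%N); last first.
    by move=> x _; rewrite phimE.
  rewrite exchange_big /=; apply: eq_bigr => i _.
  by rewrite -big_distrr /= card_sum.
rewrite /mu big_distrr /=; apply: leq_sum => i _.
have c1 : (0 < #|ev i|)%N by rewrite card_gt0 ev_neq0.
have c2 : (#|ev i| <= n)%N by rewrite -[X in (_ <= X)%N]card_ord max_card.
have h1 : (3 ^ #|ev i| <= 3 ^ n * #|ev i|)%N.
  apply: leq_trans (leq_pexp2l (isT : (0 < 3)%N) c2) _.
  by rewrite leq_pmulr.
by rewrite mulnCA leq_mul2l h1 orbT.
Qed.

Lemma reduce m : exists m', lam m' /\ Ideal ('X_[m] - 'X_[m']).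
Proof.
suff H c : forall m, (3 ^ n * mdeg (phim m) - mu m <= c)%N ->
    exists m', lam m' /\ Ideal ('X_[m] - 'X_[m']).
  exact: H (leqnn _).
elim: c => [|c IH] {}m hc; (case: (boolP (lam m)) => [L|nL];
  first by exists m; split=> //; rewrite subrr; exact: id0);
  case: (step nL) => m' [ep emu Id]; have := mu_bound m'; rewrite ep => hb.
  lia.
have hc' : (3 ^ n * mdeg (phim m') - mu m' <= c)%N by rewrite ep; lia.
case: (IH m' hc') => m'' [L'' Id'']; exists m''; split=> //.
have -> : 'X_[m] - 'X_[m''] = ('X_[m] - 'X_[m'] : {mpoly k[N]}) + ('X_[m'] - 'X_[m'']) by rewrite addrA subrK.
exact: idD.
Qed.


Lemma red_poly (s : seq 'X_{1..N}) (c : 'X_{1..N} -> k) :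
  exists q : {mpoly k[N]}, (forall m', m' \in msupp q -> lam m') /\
    Ideal (\sum_(m <- s) c m *: 'X_[m] - q).
Proof.
elim: s => [|m s [q [Lq Iq]]].
  by exists 0; split=> [m'|]; [rewrite msupp0 | rewrite big_nil subrr; exact: id0].
case: (reduce m) => m' [L Im].
exists (c m *: 'X_[m'] + q); split.
  move=> m'' /msuppD_le; rewrite mem_cat => /orP[/msuppZ_le /mem_msuppXP <- //|].
  exact: Lq.
rewrite big_cons opprD addrACA -scalerBr.
by apply: idD => //; apply: idZ.
Qed.

Lemma phi_syzJJ (JJ : cideal_fin le * cideal_fin le) :
  nontriv (val JJ.1) (val JJ.2) -> phi (syz k JJ.1 JJ.2) = 0.
Proof.
case: JJ => J1 J2 /=.
have [i ->] : exists i : 'I_N, J1 = enum_val i by exists (enum_rank J1); rewrite enum_rankK.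
have [j ->] : exists j : 'I_N, J2 = enum_val j by exists (enum_rank J2); rewrite enum_rankK.
move=> nt; have [es ep _] := syz_decomp nt.
by rewrite es phiB !phiX ep subrr.
Qed.

Lemma phi_ideal p : Ideal p -> phi p = 0.
Proof.
case=> c ->; rewrite phi_sum big1 // => JJ q.
by rewrite phiM phi_syzJJ // mulr0.
Qed.

Lemma kernel_ideal p : phi p = 0 -> Ideal p.
Proof.
move=> ep; case: (red_poly (msupp p) (fun m => p@_m)) => q [Lq Iq].
rewrite -mpolyE in Iq.
have eq0 : phi q = 0.
  by have := phi_ideal Iq; rewrite phiB ep sub0r => /eqP; rewrite oppr_eq0 => /eqP.
suff q0 : q = 0 by rewrite q0 subr0 in Iq.
apply/eqP; rewrite -msupp_eq0; case E: (msupp q) => [//|m s].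
have mq : m \in msupp q by rewrite E mem_head.
have := coef_phi_uniq mq (fun m' h e => lam_inj (Lq m' h) (Lq m mq) e).
rewrite eq0 mcoeff0 => /esym/eqP; rewrite -[_ == 0]negbK -mcoeff_msupp mq.
done.
Qed.

Lemma lam_small m : (forall x, phim m x <= 1)%N -> lam m.
Proof.
move=> H; apply/lamP => i j mi mj.
case: (eqVneq i j) => [<-|nij]; first by rewrite /nontriv subxx !andbF.
rewrite /nontriv; case: (boolP [disjoint ev i & ev j]) => //= /pred0Pn[x /andP[xi xj]].
have := phim_ge2 m nij xi xj; have := H x; lia.
Qed.

Lemma claim3 p : phi p = 0 -> forall m, m \in msupp p -> (2 <= mdeg m)%N.
Proof.
move=> ep m mp; rewrite leqNgt; apply/negP => small.
have sm m' : phim m' = phim m -> (forall x, phim m' x <= 1)%N.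
  move=> e x; rewrite e; apply: leq_trans (phim_le_deg m x) _; by rewrite -ltnS.
have H m' : m' \in msupp p -> phim m' = phim m -> m' = m.
  move=> _ e; have L1 := lam_small (sm m' e); have L2 := lam_small (sm m erefl).
  exact: lam_inj L1 L2 e.
have := coef_phi_uniq mp H; rewrite ep mcoeff0 => /esym/eqP.
by rewrite -[_ == 0]negbK -mcoeff_msupp mp.
Qed.

End Poly.

Section Claim5.
Variables (k : fieldType) (n : nat) (le : rel 'I_n).
Hypotheses (le_refl : reflexive le) (le_anti : antisymmetric le)
  (le_trans : transitive le).
Local Notation N := (nvars le).
Local Open Scope ring_scope.

Lemma claim5 (J1 J2 : cideal_fin le) : nontriv (val J1) (val J2) ->
  ~ in_ideal (fun JJ : cideal_fin le * cideal_fin le => syz k JJ.1 JJ.2)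
      (fun JJ => nontriv (val JJ.1) (val JJ.2) &&
                 ([set JJ.1; JJ.2] != [set J1; J2]))
      (syz k J1 J2).
Proof.
move=> nt [c e].
have /and3P[nd12 ns12 ns21] := nt.
pose v (t : 'I_N) : k := ((t == enum_rank J1) || (t == enum_rank J2))%:R.
have evJ (J : cideal_fin le) : meval v (UJ k J) != 0 -> J = J1 \/ J = J2.
  rewrite /UJ mevalXU /v.
  case: (eqVneq (enum_rank J) (enum_rank J1)) => [/enum_rank_inj -> _|_]; first by left.
  case: (eqVneq (enum_rank J) (enum_rank J2)) => [/enum_rank_inj -> _|_]; first by right.
  by rewrite eqxx.
have evU A : meval v (Uset k le A) != 0 -> A = val J1 \/ A = val J2.
  rewrite /Uset; case: insubP => [J _ <- /evJ [->|->]|_]; [by left | by right |].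
  by rewrite meval0 eqxx.
have sub1 : meval v (Uset k le (val J1 :|: val J2)) = 0.
  apply/eqP; apply: contraT => /evU [h|h].
    by move: ns21; rewrite -h subsetUr.
  by move: ns12; rewrite -h subsetUl.
have lhs : meval v (syz k J1 J2) = 1.
  rewrite /syz mevalB !mevalM sub1 mul0r subr0 /UJ !mevalXU /v !eqxx orbT /=.
  by rewrite mulr1.
have rhs : meval v (syz k J1 J2) = 0.
  rewrite e raddf_sum big1 // => [[J3 J4]] /= /andP[nt34 neq].
  rewrite mevalM; apply/eqP; rewrite mulf_eq0; apply/orP; right.
  have /and3P[nd34 ns34 ns43] := nt34.
  rewrite /syz mevalB mevalM; apply/eqP.
  have -> : meval v (UJ k J3) * meval v (UJ k J4) = 0.
    apply/eqP; apply: contraT; rewrite mulf_eq0 negb_or => /andP[/evJ h3 /evJ h4].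
    have n34 : J3 != J4.
      by apply/eqP=> e34; move: ns34; rewrite e34 subxx.
    by move: n34 neq; case: h3 => ->; case: h4 => ->; rewrite ?eqxx // setUC eqxx.
  suff -> : meval v (Uset k le (val J3 :|: val J4) *
      \prod_(K in components le (val J3 :&: val J4)) Uset k le K) = 0.
    by rewrite subrr.
  apply/eqP; apply: contraT; rewrite mevalM mulf_eq0 negb_or => /andP[/evU hU].
  have [x x34] := pred0Pn nd34.
  have xI : x \in val J3 :&: val J4 by rewrite inE.
  have K0C := comp_of le xI.
  set K0 := [set y in _ | _] in K0C.
  rewrite rmorph_prod (bigD1 K0) //= mulf_eq0 negb_or => /andP[/evU hK _].
  have sK := comp_sub K0C.
  have s34 : val J3 :&: val J4 \subset val J3 :|: val J4.
    exact: subset_trans (subsetIl _ _) (subsetUl _ _).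
  have nK : K0 != val J3 :|: val J4.
    apply/eqP=> eK; move: ns34; rewrite (subset_trans (subsetUl _ (val J4))) //.
    by rewrite -eK; apply: subset_trans sK (subsetIr _ _).
  case: hU => eU; case: hK => eK.
  - by rewrite eK eU eqxx in nK.
  - by move: ns21; rewrite -eK -eU (subset_trans sK s34).
  - by move: ns12; rewrite -eK -eU (subset_trans sK s34).
  - by rewrite eK eU eqxx in nK.
by move: lhs; rewrite rhs => /eqP; rewrite eq_sym oner_eq0.
Qed.

End Claim5.

Local Open Scope ring_scope.

Theorem theorem1p2 (k : fieldType) (n : nat) (le : rel 'I_n)
    (le_refl : reflexive le) (le_anti : antisymmetric le)
    (le_trans : transitive le) :
  (* phi maps S into R_P and onto R_P *)
  (forall p : {mpoly k[nvars le]}, in_RP le (phi k p)) /\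
  (forall q : {mpoly k[n]}, in_RP le q ->
     exists p : {mpoly k[nvars le]}, phi k p = q) /\
  (* minimality of the presentation: I_P = ker phi lies in (U_J)^2 *)
  (forall p : {mpoly k[nvars le]}, phi k p = 0 ->
     forall m, m \in msupp p -> (2 <= mdeg m)%N) /\
  (* I_P is generated by the syz_{J1,J2}, {J1,J2} in Pi(P) *)
  (forall p : {mpoly k[nvars le]}, phi k p = 0 <->
     in_ideal (fun JJ : cideal_fin le * cideal_fin le => syz k JJ.1 JJ.2)
              (fun JJ => nontriv (val JJ.1) (val JJ.2)) p) /\
  (* ... minimally: no syz_{J1,J2} lies in the ideal generated by the
     syz of the other unordered pairs of Pi(P) *)
  (forall J1 J2 : cideal_fin le, nontriv (val J1) (val J2) ->
     ~ in_ideal (fun JJ : cideal_fin le * cideal_fin le => syz k JJ.1 JJ.2)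
          (fun JJ => nontriv (val JJ.1) (val JJ.2) &&
                     ([set JJ.1; JJ.2] != [set J1; J2]))
          (syz k J1 J2)).
Proof.
split; first by move=> p; apply: claim1.
split; first by move=> q; apply: claim2.
split; first by move=> p; apply: claim3.
split; first by move=> p; split; [apply: kernel_ideal | apply: phi_ideal].
by move=> J1 J2; apply: claim5.
Qed.
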